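(* Let $(X,\mathtt{d})$ be a finite metric space with $X=\bigsqcup_{i=1}^sX_i$, and consider $k$-center clustering with $z$ outliers on $X$ with optimal radius $r_{\mathtt{opt}}$ and an optimal outlier set $O=\bigsqcup_{i=1}^sO_i$ with $O_i\subseteq X_i$ and $z_i^*=|O_i|$. Then $2r_{\mathtt{opt}}\geq\max_{1\leq i\leq s}r_{\mathtt{opt}}(X_i,k,z_i^* )$.
   Context: For a finite metric set $Y$ of size $N$ and integer $0\leq w<N$, $r_{\mathtt{opt}}(Y,k,w)$ denotes the optimal value of $k$-center clustering with $w$ outliers on $Y$: the minimum over $Y'\subseteq Y$ with $|Y'|\geq N-w$ and centers $c_1,\dots,c_k\in Y$ of $\max_{p\in Y'}\min_j\mathtt{d}(p,c_j)$. $r_{\mathtt{opt}}=r_{\mathtt{opt}}(X,k,z)$, and $O$ is the set of $z$ points excluded by a fixed optimal solution on $X$. *)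

(* Defs.v *)
From HB Require Import structures.
From mathcomp Require Import all_boot all_order all_algebra.
From mathcomp Require Import reals constructive_ereal.
Set Implicit Arguments. Unset Strict Implicit. Unset Printing Implicit Defensive.
Import Order.TTheory GRing.Theory Num.Theory.
Local Open Scope ring_scope.
Local Open Scope ereal_scope.

Definition is_metric (R : realType) (T : finType) (d : T -> T -> R) : Prop :=
  [/\ forall x y, d x y = 0%R <-> x = y,
      forall x y, d x y = d y x &
      forall x y w, (d x w <= d x y + d y w)%R].

Definition dist_centers (R : realType) (T : finType) (d : T -> T -> R) (k : nat)
  (c : {ffun 'I_k -> T}) (p : T) : \bar R :=
  \big[mine/+oo]_(j < k) (d p (c j))%:E.

Definition kcost (R : realType) (T : finType) (d : T -> T -> R) (k : nat)
  (Y' : {set T}) (c : {ffun 'I_k -> T}) : \bar R :=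
  \big[maxe/-oo]_(p in Y') dist_centers d c p.

Definition r_opt (R : realType) (T : finType) (d : T -> T -> R)
  (Y : {set T}) (k w : nat) : \bar R :=
  \big[mine/+oo]_(Y' : {set T} | (Y' \subset Y) && (#|Y| - w <= #|Y'|)%N)
    \big[mine/+oo]_(c : {ffun 'I_k -> T} | [forall j, c j \in Y]) kcost d Y' c.

(* Main.v *)
Require Import Defs.
From HB Require Import structures.
From mathcomp Require Import all_boot all_order all_algebra.
From mathcomp Require Import reals constructive_ereal.
From mathcomp Require Import lra.
Import Order.TTheory GRing.Theory Num.Theory.
Local Open Scope ring_scope.
Local Open Scope ereal_scope.

Theorem lemma18 (R : realType) (T : finType) (d : T -> T -> R)
  (s : nat) (Xs : 'I_s -> {set T}) (k z : nat) (O : {set T})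
  (c : {ffun 'I_k -> T}) :
  is_metric d ->
  (forall i, Xs i != set0) ->
  (forall i j, i != j -> [disjoint Xs i & Xs j]) ->
  (forall x : T, exists i, x \in Xs i) ->
  (0 < k)%N -> (z < #|T|)%N ->
  #|O| = z ->
  kcost d (~: O) c = r_opt d [set: T] k z ->
  forall i : 'I_s,
    r_opt d (Xs i) k #|O :&: Xs i| <= 2%:E * r_opt d [set: T] k z.
Proof.
move=> [d0 dsym dtri] Xne _ _ k0 _ _ Hopt i.
rewrite -Hopt.
have /set0Pn [x0 x0X] := Xne i.
pose c' := [ffun j => [arg min_(q < x0 in Xs i) d q (c j)]%O] : {ffun 'I_k -> T}.
have c'P : forall j, c' j \in Xs i /\ forall q, q \in Xs i -> (d (c' j) (c j) <= d q (c j))%R.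
  move=> j; rewrite /c' ffunE.
  by case: arg_minP => // q Hq Hmin; split => // q' /Hmin.
set Y' := Xs i :\: O.
have HY : (Y' \subset Xs i) && (#|Xs i| - #|O :&: Xs i| <= #|Y'|)%N.
  by rewrite subsetDl /Y' cardsD setIC leqnn.
have H1 : r_opt d (Xs i) k #|O :&: Xs i| <= kcost d Y' c'.
  rewrite /r_opt.
  apply: (@bigmin_inf _ _ _ _ Y') => //.
  apply: (@bigmin_inf _ _ _ _ c') => //.
  by apply/forallP => j; case: (c'P j).
apply: le_trans H1 _.
apply: bigmax_le; first exact: leNye.
move=> p; rewrite /Y' inE => /andP [pO pX].
have Hp : dist_centers d c p <= kcost d (~: O) c.
  by apply: le_bigmax_cond; rewrite inE.
have [j _ Hj] := @eq_bigmin _ _ _ +oo%E (Ordinal k0) xpredT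
  (fun j => (d p (c j))%:E) isT (fun _ _ => leey _).
rewrite /dist_centers in Hp; rewrite Hj in Hp.
have H3 : dist_centers d c' p <= (d p (c' j))%:E.
  by rewrite /dist_centers; exact: (bigmin_le _ j (fun j => (d p (c' j))%:E)).
apply: le_trans H3 _.
have H2 : 2%:E * (d p (c j))%:E <= 2%:E * kcost d (~: O) c.
  by apply: (lee_wpmul2l _ Hp); rewrite lee_fin.
apply: le_trans H2.
rewrite -EFinM lee_fin.
apply: (@le_trans _ _ (d p (c j) + d (c j) (c' j))%R); first exact: dtri.
rewrite (dsym (c j)).
have := proj2 (c'P j) p pX.
move=> H; rewrite mulr_natl mulr2n lerD2l.
exact: H.
Qed.
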